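(* Let $L\ge 2$ and let $f_{i,j}:\mathbb{R}\to\mathbb{R}$, $i,j=0,\ldots,L-1$, be continuous $1$-periodic functions. For each $i$ and $\boldsymbol{y}=(y_0,\ldots,y_{L-1})\in\mathbb{R}^L$ define $$g_i(\boldsymbol{y}) := \int_{[0,1]^L} \prod_{j=0}^{L-1} f_{i,j}\bigl(x_j - x_{j+1} + y_j\bigr)\,\mathrm{d}\boldsymbol{x},\qquad x_L\equiv x_0.$$ Let $$\mathcal{I} := \int_{[0,1]^L}\cdots\int_{[0,1]^L} \prod_{i=0}^{L-1} g_i\bigl(\boldsymbol{y}_{i+1}-\boldsymbol{y}_i\bigr)\,\mathrm{d}\boldsymbol{y}_0\cdots\mathrm{d}\boldsymbol{y}_{L-1},$$ where each $\boldsymbol{y}_i\in[0,1]^L$ and $\boldsymbol{y}_L\equiv\boldsymbol{y}_0$. Then $$\mathcal{I} = \int_{[0,1]^L} \prod_{i=0}^{L-1} g_i\bigl(y_{i+1}-y_i,\,0,\ldots,0\bigr)\,\mathrm{d}\boldsymbol{y},$$ where now $\boldsymbol{y}=(y_0,\ldots,y_{L-1})\in[0,1]^L$ with scalar components and $y_L\equiv y_0$.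
   Context: Indices of integration variables are taken modulo $L$ (periodic boundary conditions). *)

(* Defs.v *)
From Stdlib Require Import Reals Arith.
From Coquelicot Require Import Coquelicot.
Open Scope R_scope.

Fixpoint prodR (n : nat) (h : nat -> R) : R :=
  match n with
  | O => 1
  | S n' => prodR n' h * h n'
  end.

(* Integral over the unit cube [0,1]^n of F, where a point of the cube is a
   vector x : nat -> R whose coordinates x 0, ..., x (n-1) range over [0,1]
   (coordinates >= n are fixed to 0).  It is computed as the iterated
   Riemann integral (Coquelicot RInt), one coordinate at a time; for the
   continuous integrands considered here this equals the Lebesgue integral
   over the cube (Fubini). *)
Fixpoint cube_int (n : nat) (F : (nat -> R) -> R) : R :=
  match n with
  | O => F (fun _ => 0)
  | S n' => RInt (fun t => cube_int n' (fun x => F (fun k => if Nat.eqb k n' then t else x k))) 0 1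
  end.

Definition gfun (L : nat) (f : nat -> nat -> R -> R) (i : nat) (y : nat -> R) : R :=
  cube_int L (fun x =>
    prodR L (fun j => f i j (x j - x (Nat.modulo (j + 1)%nat L) + y j))).

(* The L vectors y_0, ..., y_{L-1} in [0,1]^L are packed into one point z of
   [0,1]^(L*L): component k of y_i is z (i*L + k). *)
Definition block (L : nat) (z : nat -> R) (i : nat) : nat -> R :=
  fun k => z (i * L + k)%nat.

Definition Ical (L : nat) (f : nat -> nat -> R -> R) : R :=
  cube_int (L * L)%nat (fun z =>
    prodR L (fun i => gfun L f i
      (fun k => block L z (Nat.modulo (i + 1)%nat L) k - block L z i k))).

Definition first_only (t : R) : nat -> R :=
  fun k => if Nat.eqb k 0 then t else 0.

(* Main.v *)
Require Import Defs.
From Stdlib Require Import Reals Arith Lia Lra ZArith FunctionalExtensionality.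
From Coquelicot Require Import Coquelicot.
Open Scope R_scope.


Definition UC1 (g : R -> R) := forall eps, 0 < eps -> exists d, 0 < d /\
  forall a b, Rabs (a - b) < d -> Rabs (g a - g b) < eps.
Definition Bd1 (g : R -> R) := exists M, forall a, Rabs (g a) <= M.

Lemma per_nat0 (g : R -> R) : (forall x, g (x + 1) = g x) ->
  forall n x, g (x + INR n) = g x.
Proof.
  intros Hg n; induction n as [|n IH]; intro x.
  - simpl; f_equal; ring.
  - rewrite S_INR. replace (x + (INR n + 1)) with ((x + INR n) + 1) by ring.
    rewrite Hg; apply IH.
Qed.

Lemma per_nat (g : R -> R) : (forall x, g (x + 1) = g x) ->
  forall n x, g (x + INR n) = g x /\ g (x - INR n) = g x.
Proof.
  intros Hg n x. split. apply per_nat0; auto.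
  rewrite <- (per_nat0 g Hg n (x - INR n)). f_equal; ring.
Qed.

Lemma per_Z (g : R -> R) : (forall x, g (x + 1) = g x) ->
  forall z x, g (x + IZR z) = g x.
Proof.
  intros Hg z x. destruct z as [|p|p].
  - simpl; f_equal; ring.
  - rewrite <- Znat.positive_nat_Z, <- INR_IZR_INZ. apply per_nat; auto.
  - rewrite IZR_NEG, <- Znat.positive_nat_Z, <- INR_IZR_INZ.
    replace (x + - INR (Pos.to_nat p)) with (x - INR (Pos.to_nat p)) by ring.
    apply per_nat; auto.
Qed.

Lemma red01 (a : R) : exists z, 0 <= a + IZR z <= 1.
Proof.
  exists (- Int_part a)%Z. rewrite opp_IZR. destruct (base_Int_part a). lra.
Qed.

Lemma cont_pt (g : R -> R) x : continuous g x -> continuity_pt g x.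
Proof. intro H. apply continuity_pt_filterlim. exact H. Qed.

Lemma per_UC (g : R -> R) : (forall x, continuous g x) -> (forall x, g (x + 1) = g x) ->
  UC1 g /\ Bd1 g.
Proof.
  intros Hc Hp. split.
  - intros eps Heps.
    destruct (Heine g (fun c => -1 <= c <= 2) (compact_P3 (-1) 2)
      (fun x _ => cont_pt g x (Hc x)) (mkposreal eps Heps)) as [[d Hd] H].
    exists (Rmin d 1). split. { apply Rmin_case; lra. }
    intros a b Hab. destruct (red01 a) as [z Hz].
    rewrite <- (per_Z g Hp z a), <- (per_Z g Hp z b).
    assert (Rabs (a - b) < d /\ Rabs (a - b) < 1) as [H1 H2].
    { split; eapply Rlt_le_trans; eauto; [apply Rmin_l | apply Rmin_r]. }
    apply H; simpl.
    + lra.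
    + apply Rabs_lt_between in H2. lra.
    + replace (a + IZR z - (b + IZR z)) with (a - b) by ring. exact H1.
  - destruct (continuity_ab_maj (fun x => Rabs (g x)) 0 1) as [M [HM _]]. lra.
    { intros c _. apply (continuity_pt_comp g Rabs). apply cont_pt, Hc. apply Rcontinuity_abs. }
    exists (Rabs (g M)). intro a. destruct (red01 a) as [z Hz].
    rewrite <- (per_Z g Hp z a). apply HM. exact Hz.
Qed.

Lemma per_minus (g : R -> R) : (forall x, g (x + 1) = g x) -> forall x, g (x - 1) = g x.
Proof. intros Hp x. rewrite <- (Hp (x - 1)). f_equal; ring. Qed.

Lemma cont_eps (g : R -> R) x :
  (forall eps, 0 < eps -> exists d, 0 < d /\ forall y, Rabs (y - x) < d -> Rabs (g y - g x) < eps) ->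
  continuous g x.
Proof.
  intro H. apply filterlim_locally. intros [e He].
  destruct (H e He) as [d [Hd Hy]]. exists (mkposreal d Hd). intros y Hb. apply Hy. exact Hb.
Qed.

Lemma trans1 (H : R -> R) : (forall x, continuous H x) -> (forall x, H (x + 1) = H x) ->
  forall c, RInt (fun t => H (t + c)) 0 1 = RInt H 0 1.
Proof.
  intros Hc Hp c.
  assert (Ex : forall a b, ex_RInt H a b) by (intros; apply (ex_RInt_continuous (V:=R_CompleteNormedModule)); auto).
  transitivity (RInt (fun y => scal 1 (H (1 * y + c))) 0 1).
  { apply RInt_ext. intros. unfold scal; simpl; unfold mult; simpl. rewrite Rmult_1_l. f_equal; ring. }
  rewrite (RInt_comp_lin (V:=R_CompleteNormedModule)) by apply Ex.
  replace (1 * 0 + c) with c by ring. replace (1*1+c) with (1 + c) by ring.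
  rewrite <- (RInt_Chasles (V:=R_CompleteNormedModule) H c 1 (1 + c)) by apply Ex.
  rewrite <- (RInt_Chasles (V:=R_CompleteNormedModule) H 0 c 1) by apply Ex.
  assert (E : RInt H 1 (1 + c) = RInt H 0 c).
  { transitivity (RInt (fun y => scal 1 (H (1 * y + 1))) 0 c).
    - rewrite (RInt_comp_lin (V:=R_CompleteNormedModule)). f_equal; ring. replace (1*0+1) with 1 by ring.
      replace (1*c+1) with (1+c) by ring. apply Ex.
    - apply RInt_ext. intros. unfold scal; simpl; unfold mult; simpl.
      rewrite Rmult_1_l. replace (1 * x + 1) with (x + 1) by ring. apply Hp. }
  rewrite E. unfold plus; simpl. ring.
Qed.


Definition close (x y : nat -> R) d := forall k, Rabs (x k - y k) < d.
Definition UC (F : (nat -> R) -> R) := forall eps, 0 < eps -> exists d, 0 < d /\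
  forall x y, close x y d -> Rabs (F x - F y) < eps.
Definition Bd (F : (nat -> R) -> R) := exists M, forall x, Rabs (F x) <= M.
Definition lin (phi : (nat -> R) -> R) := forall x y d, close x y d -> Rabs (phi x - phi y) <= 3 * d.
Definition upd (x : nat -> R) (n : nat) (t : R) : nat -> R := fun k => if Nat.eqb k n then t else x k.

Lemma close_pos x y d : close x y d -> 0 < d.
Proof. intro H. specialize (H O). pose proof (Rabs_pos (x O - y O)). lra. Qed.

Lemma comp_UC g phi : UC1 g -> Bd1 g -> lin phi -> UC (fun x => g (phi x)) /\ Bd (fun x => g (phi x)).
Proof.
  intros Hu [M HM] Hl. split.
  - intros eps He. destruct (Hu eps He) as [d [Hd H]]. exists (d / 4). split. lra.
    intros x y Hc. apply H. specialize (Hl x y _ Hc). lra.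
  - exists M. intro; apply HM.
Qed.

Lemma mul_UC F G : UC F -> Bd F -> UC G -> Bd G -> UC (fun x => F x * G x) /\ Bd (fun x => F x * G x).
Proof.
  intros HF [M1 H1] HG [M2 H2].
  assert (P1 : 0 <= M1) by (specialize (H1 (fun _ => 0)); pose proof (Rabs_pos (F (fun _ => 0))); lra).
  assert (P2 : 0 <= M2) by (specialize (H2 (fun _ => 0)); pose proof (Rabs_pos (G (fun _ => 0))); lra).
  split.
  - intros eps He. set (e := eps / (M1 + M2 + 1)).
    assert (He' : 0 < e) by (unfold e; apply Rdiv_lt_0_compat; lra).
    destruct (HF e He') as [d1 [Hd1 K1]]. destruct (HG e He') as [d2 [Hd2 K2]].
    exists (Rmin d1 d2). split. { apply Rmin_case; lra. }
    intros x y Hc.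
    assert (C1 : close x y d1) by (intro k; eapply Rlt_le_trans; [apply Hc|apply Rmin_l]).
    assert (C2 : close x y d2) by (intro k; eapply Rlt_le_trans; [apply Hc|apply Rmin_r]).
    specialize (K1 x y C1). specialize (K2 x y C2).
    replace (F x * G x - F y * G y) with (F x * (G x - G y) + G y * (F x - F y)) by ring.
    eapply Rle_lt_trans. apply Rabs_triang. rewrite !Rabs_mult.
    assert (Rabs (F x) * Rabs (G x - G y) <= M1 * e).
    { apply Rmult_le_compat; try apply Rabs_pos; auto; lra. }
    assert (Rabs (G y) * Rabs (F x - F y) <= M2 * e).
    { apply Rmult_le_compat; try apply Rabs_pos; auto; lra. }
    assert (M1 * e + M2 * e < eps).
    { unfold e. replace (M1 * (eps / (M1 + M2 + 1)) + M2 * (eps / (M1 + M2 + 1))) with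
        (eps * ((M1 + M2) / (M1 + M2 + 1))) by (field; lra).
      rewrite <- (Rmult_1_r eps) at 2. apply Rmult_lt_compat_l; auto.
      apply Rmult_lt_reg_r with (M1 + M2 + 1). lra. unfold Rdiv. rewrite Rmult_assoc, Rinv_l; lra. }
    lra.
  - exists (M1 * M2). intro x. rewrite Rabs_mult. apply Rmult_le_compat; try apply Rabs_pos; auto.
Qed.

Lemma prod_UC n (h : nat -> (nat -> R) -> R) :
  (forall j, (j < n)%nat -> UC (h j) /\ Bd (h j)) ->
  UC (fun x => prodR n (fun j => h j x)) /\ Bd (fun x => prodR n (fun j => h j x)).
Proof.
  induction n as [|n IH]; intro H; simpl.
  - split. intros eps He. exists 1. split. lra. intros. rewrite Rminus_diag, Rabs_R0. lra.
    exists 1. intro. rewrite Rabs_R1. lra.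
  - destruct IH as [U B]. { intros j Hj. apply H. lia. }
    destruct (H n ltac:(lia)).
    apply (mul_UC (fun x => prodR n (fun j => h j x)) (h n)); auto.
Qed.

Lemma prodR_ext n h h' : (forall j, (j < n)%nat -> h j = h' j) -> prodR n h = prodR n h'.
Proof.
  induction n; intro H; simpl; auto. rewrite IHn, H; auto.
Qed.

Lemma cube_ext n F G : (forall x, F x = G x) -> cube_int n F = cube_int n G.
Proof. intro H. replace G with F; auto. apply functional_extensionality; auto. Qed.

Lemma close_upd x y d N s : close x y d -> close (upd x N s) (upd y N s) d.
Proof.
  intros H k. unfold upd. destruct (Nat.eqb k N). rewrite Rminus_diag, Rabs_R0. eapply close_pos; eauto.
  apply H.
Qed.

Lemma UC_upd F N s : UC F -> UC (fun x => F (upd x N s)).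
Proof.
  intros H eps He. destruct (H eps He) as [d [Hd K]]. exists d. split; auto.
  intros. apply K. apply close_upd; auto.
Qed.

Definition BoundP n := forall F G eps, UC F -> UC G -> (forall x, Rabs (F x - G x) <= eps) ->
  Rabs (cube_int n F - cube_int n G) <= eps.

Lemma cont_of_bound n : BoundP n ->
  forall F N, UC F -> forall s, continuous (fun s => cube_int n (fun x => F (upd x N s))) s.
Proof.
  intros B F N HF s. apply cont_eps. intros eps He.
  destruct (HF (eps/2) ltac:(lra)) as [d [Hd K]]. exists d. split; auto.
  intros y Hy. eapply Rle_lt_trans; [|apply (Rlt_eps2_eps eps He)].
  apply B. apply UC_upd; auto. apply UC_upd; auto.
  intro x. left. apply K. intro k. unfold upd. destruct (Nat.eqb k N); auto.
  rewrite Rminus_diag, Rabs_R0; auto.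
Qed.

Lemma cube_bound n : BoundP n.
Proof.
  induction n as [|n IH].
  + intros F G eps _ _ H. simpl. apply H.
  + intros F G eps HF HG H. simpl.
      assert (EF : ex_RInt (fun t => cube_int n (fun x => F (upd x n t))) 0 1).
      { apply (ex_RInt_continuous (V:=R_CompleteNormedModule)). intros. apply cont_of_bound; auto. }
      assert (EG : ex_RInt (fun t => cube_int n (fun x => G (upd x n t))) 0 1).
      { apply (ex_RInt_continuous (V:=R_CompleteNormedModule)). intros. apply cont_of_bound; auto. }
      change (Rabs (minus (RInt (fun t => cube_int n (fun x => F (upd x n t))) 0 1)
                          (RInt (fun t => cube_int n (fun x => G (upd x n t))) 0 1)) <= eps).
      rewrite <- (RInt_minus (V:=R_CompleteNormedModule)) by auto.
      replace eps with ((1 - 0) * eps) by ring.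
      apply abs_RInt_le_const. lra.
      apply (ex_RInt_minus (V:=R_CompleteNormedModule)); auto.
      intros t _. apply IH. apply UC_upd; auto. apply UC_upd; auto. intro; apply H.
Qed.

Lemma cube_cont n F N : UC F -> forall s, continuous (fun s => cube_int n (fun x => F (upd x N s))) s.
Proof. apply cont_of_bound, cube_bound. Qed.


Definition shv n (c x : nat -> R) : nat -> R := fun k => if Nat.ltb k n then x k + c k else x k.
Definition perP (F : (nat -> R) -> R) n := forall y k, (k < n)%nat -> F (upd y k (y k + 1)) = F y.
Definition depP (F : (nat -> R) -> R) m := forall y y', (forall i, (i < m)%nat -> y i = y' i) -> F y = F y'.

Lemma upd_comm y k n a b : k <> n -> upd (upd y k a) n b = upd (upd y n b) k a.
Proof.
  intro H. apply functional_extensionality. intro j. unfold upd.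
  destruct (Nat.eqb_spec j n), (Nat.eqb_spec j k); auto. lia.
Qed.
Lemma upd_upd y n a b : upd (upd y n a) n b = upd y n b.
Proof. apply functional_extensionality. intro j. unfold upd. destruct (Nat.eqb j n); auto. Qed.
Lemma upd_same y n a : upd y n a n = a.
Proof. unfold upd. rewrite Nat.eqb_refl. auto. Qed.
Lemma upd_other y n a k : k <> n -> upd y n a k = y k.
Proof. intro H. unfold upd. destruct (Nat.eqb_spec k n); auto. lia. Qed.

Lemma Hcont_per n F : UC F -> perP F (S n) ->
  (forall s, continuous (fun s => cube_int n (fun x => F (upd x n s))) s) /\
  (forall s, cube_int n (fun x => F (upd x n (s + 1))) = cube_int n (fun x => F (upd x n s))).
Proof.
  intros HU HP. split. apply cube_cont; auto.
  intro s. apply cube_ext. intro x. rewrite <- (HP (upd x n s) n) by lia.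
  rewrite upd_same, upd_upd. auto.
Qed.

Lemma trans n : forall F c, UC F -> perP F n -> cube_int n (fun x => F (shv n c x)) = cube_int n F.
Proof.
  induction n as [|n IH]; intros F c HU HP.
  - simpl. f_equal.
  - simpl.
    destruct (Hcont_per n F HU HP) as [Hc Hp].
    transitivity (RInt (fun t => cube_int n (fun x => F (upd x n (t + c n)))) 0 1).
    2: { apply (trans1 _ Hc Hp (c n)). }
    apply RInt_ext. intros t _.
    transitivity (cube_int n (fun x => (fun y => F (upd y n (t + c n))) (shv n c x))).
    { apply cube_ext. intro x. f_equal. apply functional_extensionality. intro k.
      unfold shv, upd. destruct (Nat.eqb_spec k n), (Nat.ltb_spec k (S n)), (Nat.ltb_spec k n);
        subst; auto; try lia; ring. }
    apply (IH (fun y => F (upd y n (t + c n)))). apply UC_upd; auto.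
    intros y k Hk. rewrite upd_comm by lia. rewrite <- (HP (upd y n (t + c n)) k) by lia.
    rewrite upd_other by lia. auto.
Qed.

Lemma cube_ext_lo n : forall F G, (forall x, (forall k, (n <= k)%nat -> x k = 0) -> F x = G x) ->
  cube_int n F = cube_int n G.
Proof.
  induction n as [|n IH]; intros F G H; simpl.
  - apply H. auto.
  - apply RInt_ext. intros t _. apply IH. intros x Hx. apply H. intros k Hk.
    unfold upd. destruct (Nat.eqb_spec k n). lia. apply Hx. lia.
Qed.

Definition glue a (x w : nat -> R) : nat -> R := fun k => if Nat.ltb k a then x k else w (k - a)%nat.

Lemma split_cube a b : forall F, cube_int (a + b) F = cube_int b (fun w => cube_int a (fun x => F (glue a x w))).
Proof.
  induction b as [|b IH]; intro F.
  - rewrite Nat.add_0_r. simpl. apply cube_ext_lo. intros x Hx. f_equal.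
    apply functional_extensionality. intro k. unfold glue. destruct (Nat.ltb_spec k a); auto.
  - rewrite Nat.add_succ_r. simpl. apply RInt_ext. intros t _. rewrite IH.
    apply cube_ext. intro w. apply cube_ext. intro x. f_equal.
    apply functional_extensionality. intro k. unfold glue, upd.
    destruct (Nat.ltb_spec k a), (Nat.eqb_spec k (a + b)), (Nat.eqb_spec (k - a) b); auto; lia.
Qed.

Fixpoint psum (m : nat) (w : nat -> R) : R :=
  match m with O => 0 | S m' => psum m' w + w m' end.

Lemma psum_ext m w w' : (forall k, (k < m)%nat -> w k = w' k) -> psum m w = psum m w'.
Proof. induction m; intro H; simpl; auto. rewrite IHm, H; auto. Qed.

Lemma psum_upd m w N t : (m <= N)%nat -> psum m (upd w N t) = psum m w.
Proof. intro H. apply psum_ext. intros. apply upd_other. lia. Qed.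

Lemma cube_S n F : cube_int (S n) F = RInt (fun t => cube_int n (fun x => F (upd x n t))) 0 1.
Proof. reflexivity. Qed.

Lemma sum_int n : forall (H : R -> R) c, (forall s, continuous H s) -> (forall s, H (s + 1) = H s) ->
  cube_int (S n) (fun w => H (c + psum (S n) w)) = RInt H 0 1.
Proof.
  induction n as [|n IH]; intros H c Hc Hp.
  - simpl. transitivity (RInt (fun t => H (t + c)) 0 1). 2: apply (trans1 H Hc Hp c). apply RInt_ext. intros. f_equal. ring.
  - rewrite cube_S. transitivity (RInt (fun _ => RInt H 0 1) 0 1).
    + apply RInt_ext. intros t _. rewrite <- (IH H (c + t) Hc Hp). apply cube_ext. intro x.
      f_equal. change (c + (psum (S n) (upd x (S n) t) + upd x (S n) t (S n)) = c + t + psum (S n) x).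
      rewrite psum_upd, upd_same by lia. ring.
    + rewrite RInt_const. unfold scal; simpl; unfold mult; simpl. ring.
Qed.

Definition Ssum L (z : nat -> R) : nat -> R := fun i => psum L (fun k => z (i * L + k)%nat).

Lemma collapse L (HL : (1 <= L)%nat) m : forall Psi, UC Psi -> perP Psi m -> depP Psi m ->
  cube_int (m * L) (fun z => Psi (Ssum L z)) = cube_int m Psi.
Proof.
  induction m as [|m IH]; intros Psi HU HP HD.
  - simpl. apply HD. intros; lia.
  - replace (S m * L)%nat with (m * L + L)%nat by lia. rewrite split_cube.
    transitivity (cube_int L (fun w => cube_int m (fun y => Psi (upd y m (0 + psum L w))))).
    + apply cube_ext. intro w. rewrite <- (IH (fun y => Psi (upd y m (0 + psum L w)))).
      * apply cube_ext. intro x. apply HD. intros i Hi. unfold Ssum, upd.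
        destruct (Nat.eqb_spec i m).
        -- subst. rewrite Rplus_0_l. apply psum_ext. intros k Hk. unfold glue.
           destruct (Nat.ltb_spec (m * L + k) (m * L)). lia. f_equal. lia.
        -- apply psum_ext. intros k Hk. unfold glue.
           destruct (Nat.ltb_spec (i * L + k) (m * L)); auto. nia.
      * apply UC_upd; auto.
      * intros y k Hk. rewrite upd_comm by lia. rewrite <- (HP (upd y m _) k) by lia.
        rewrite upd_other by lia. auto.
      * intros y y' Hy. apply HD. intros i Hi. unfold upd. destruct (Nat.eqb_spec i m); auto.
        apply Hy. lia.
    + destruct (Hcont_per m Psi HU HP) as [Hc Hp].
      destruct L as [|L']. lia.
      apply (sum_int L' (fun s => cube_int m (fun y => Psi (upd y m s))) 0 Hc Hp).
Qed.


Lemma lin_gen phi a b N e c : Rabs e <= 1 -> (forall x, phi x = x a - x b + e * x N + c) -> lin phi.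
Proof.
  intros He H x y d Hc. rewrite !H.
  replace (x a - x b + e * x N + c - (y a - y b + e * y N + c)) with
    ((x a - y a) - (x b - y b) + e * (x N - y N)) by ring.
  pose proof (Hc a). pose proof (Hc b). pose proof (Hc N).
  eapply Rle_trans. apply Rabs_triang. rewrite Rabs_mult.
  eapply Rle_trans. apply Rplus_le_compat_r. apply Rabs_triang.
  rewrite Rabs_Ropp.
  assert (Rabs e * Rabs (x N - y N) <= 1 * d).
  { apply Rmult_le_compat; try apply Rabs_pos; lra. }
  lra.
Qed.

Lemma per_lin (g : R -> R) : (forall s, g (s + 1) = g s) ->
  forall a b k x, g (upd x k (x k + 1) a - upd x k (x k + 1) b) = g (x a - x b).
Proof.
  intros Hp a b k x. unfold upd.
  destruct (Nat.eqb_spec a k), (Nat.eqb_spec b k); subst.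
  - f_equal; ring.
  - rewrite <- (Hp (x k - x b)). f_equal; ring.
  - rewrite <- (per_minus g Hp (x a - x k)). f_equal; ring.
  - auto.
Qed.

Lemma psum_minus m a b : psum m (fun k => a k - b k) = psum m a - psum m b.
Proof. induction m; simpl. ring. rewrite IHm. ring. Qed.

Section Main.
Variable L : nat.
Variable f : nat -> nat -> R -> R.
Hypothesis HL : (2 <= L)%nat.
Hypothesis Hc : forall i j, (i < L)%nat -> (j < L)%nat -> forall x, continuous (f i j) x.
Hypothesis Hp : forall i j, (i < L)%nat -> (j < L)%nat -> forall x, f i j (x + 1) = f i j x.

Let md j := Nat.modulo (j + 1)%nat L.
Lemma md_lt j : (md j < L)%nat.
Proof. unfold md. apply Nat.mod_upper_bound. lia. Qed.

Definition P i (y x : nat -> R) := prodR L (fun j => f i j (x j - x (Nat.modulo (j + 1)%nat L) + y j)).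

Lemma fUC i j : (i < L)%nat -> (j < L)%nat -> UC1 (f i j) /\ Bd1 (f i j).
Proof. intros. apply per_UC; auto. Qed.

Lemma P_UC i y : (i < L)%nat -> UC (P i y).
Proof.
  intro Hi. unfold P. apply (prod_UC L (fun j x => f i j (x j - x (md j) + y j))).
  intros j Hj. destruct (fUC i j Hi Hj). apply comp_UC; auto.
  apply (lin_gen _ j (md j) O 0 (y j)). rewrite Rabs_R0; lra. intro; ring.
Qed.

Lemma P_per i y : (i < L)%nat -> perP (P i y) L.
Proof.
  intros Hi x k Hk. unfold P. apply prodR_ext. intros j Hj.
  apply (per_lin (fun s => f i j (s + y j))). intro s.
  replace (s + 1 + y j) with ((s + y j) + 1) by ring. apply Hp; auto.
Qed.

Lemma gfun_shift i y : (i < L)%nat -> gfun L f i y = gfun L f i (first_only (psum L y)).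
Proof.
  intro Hi. unfold gfun. fold (P i y). fold (P i (first_only (psum L y))).
  set (c := fun j => if Nat.eqb j 0 then 0 else psum j y - psum L y).
  rewrite <- (trans L (P i y) c (P_UC i y Hi) (P_per i y Hi)).
  apply cube_ext. intro x. unfold P. apply prodR_ext. intros j Hj. f_equal.
  unfold shv. pose proof (md_lt j) as Hm. unfold md in Hm.
  destruct (Nat.ltb_spec j L); [|lia]. destruct (Nat.ltb_spec ((j + 1) mod L) L); [|lia].
  unfold c, first_only.
  destruct (Nat.eq_dec (j + 1) L) as [E|E].
  - rewrite E, Nat.mod_same by lia. simpl.
    destruct (Nat.eqb_spec j 0). lia.
    replace L with (S j) by lia. simpl. ring.
  - rewrite Nat.mod_small by lia.
    destruct (Nat.eqb_spec j 0), (Nat.eqb_spec (j + 1) 0); try lia.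
    + subst. simpl. ring.
    + replace (j + 1)%nat with (S j) by lia. simpl. ring.
Qed.

Definition G i s := gfun L f i (first_only s).

Lemma G_per i : (i < L)%nat -> forall s, G i (s + 1) = G i s.
Proof.
  intros Hi s. unfold G, gfun. apply cube_ext. intro x. apply prodR_ext. intros j Hj.
  unfold first_only. destruct (Nat.eqb j 0); [|auto].
  match goal with |- f i j ?a = f i j ?b => replace a with (b + 1) by ring end; apply Hp; auto.
Qed.

Definition Q i (w : nat -> R) := prodR L (fun j => f i j (w j - w (Nat.modulo (j + 1)%nat L) + first_only (w L) j)).

Lemma G_cont i : (i < L)%nat -> forall s, continuous (G i) s.
Proof.
  intros Hi s.
  assert (E : G i = fun s => cube_int L (fun x => Q i (upd x L s))).
  { apply functional_extensionality. intro t. unfold G, gfun, Q. apply cube_ext. intro x.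
    apply prodR_ext. intros j Hj. pose proof (md_lt j) as Hm. unfold md in Hm.
    rewrite upd_same, !upd_other by lia. auto. }
  rewrite E. apply cube_cont.
  unfold Q. apply (prod_UC L (fun j x => f i j (x j - x (md j) + first_only (x L) j))).
  intros j Hj. destruct (fUC i j Hi Hj). apply comp_UC; auto.
  apply (lin_gen _ j (md j) L (if Nat.eqb j 0 then 1 else 0) 0).
  destruct (Nat.eqb j 0); [rewrite Rabs_R1|rewrite Rabs_R0]; lra.
  intro x. unfold first_only. destruct (Nat.eqb j 0); ring.
Qed.

Definition Psi (y : nat -> R) := prodR L (fun i => G i (y (Nat.modulo (i + 1)%nat L) - y i)).

Lemma Psi_UC : UC Psi.
Proof.
  unfold Psi. apply (prod_UC L (fun i y => G i (y (md i) - y i))).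
  intros i Hi. destruct (per_UC (G i) (G_cont i Hi) (G_per i Hi)).
  apply comp_UC; auto.
  apply (lin_gen _ (md i) i O 0 0). rewrite Rabs_R0; lra. intro; ring.
Qed.

Lemma Psi_per : perP Psi L.
Proof.
  intros y k Hk. unfold Psi. apply prodR_ext. intros i Hi.
  apply per_lin. apply G_per; auto.
Qed.

Lemma Psi_dep : depP Psi L.
Proof.
  intros y y' H. unfold Psi. apply prodR_ext. intros i Hi.
  pose proof (md_lt i) as Hm. unfold md in Hm. rewrite !H; auto.
Qed.

Theorem main :
  Ical L f =
  cube_int L (fun y =>
    prodR L (fun i => gfun L f i (first_only (y (Nat.modulo (i + 1)%nat L) - y i)))).
Proof.
  change (Ical L f = cube_int L Psi).
  rewrite <- (collapse L ltac:(lia) L Psi Psi_UC Psi_per Psi_dep).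
  unfold Ical. apply cube_ext. intro z. unfold Psi. apply prodR_ext. intros i Hi.
  rewrite gfun_shift by auto. unfold G. f_equal. f_equal.
  rewrite psum_minus. reflexivity.
Qed.
End Main.

Theorem lemma2 (L : nat) (f : nat -> nat -> R -> R) :
  (2 <= L)%nat ->
  (forall i j, (i < L)%nat -> (j < L)%nat -> forall x, continuous (f i j) x) ->
  (forall i j, (i < L)%nat -> (j < L)%nat -> forall x, f i j (x + 1) = f i j x) ->
  Ical L f =
  cube_int L (fun y =>
    prodR L (fun i => gfun L f i (first_only (y (Nat.modulo (i + 1)%nat L) - y i)))).
Proof.
  intros HL Hc Hp. eapply main; eauto.
Qed.
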